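(* Let $q\in\mathbb{C}$ with $|q|=1$, not a root of unity, with a fixed square root $q^{1/2}$. Let $\mathcal{A}=SL_q(2,\mathbb{R})$ be the Hopf $*$-algebra generated by self-adjoint $a,b,c,d$ with relations $ab=q\,ba$, $ac=q\,ca$, $bc=cb$, $bd=q\,db$, $cd=q\,dc$, $da-q^{-1}bc=1=ad-q\,bc$, comultiplication $\Delta(a)=a\otimes a+b\otimes c$, $\Delta(b)=a\otimes b+b\otimes d$, $\Delta(c)=c\otimes a+d\otimes c$, $\Delta(d)=c\otimes b+d\otimes d$, counit $\varepsilon(a)=\varepsilon(d)=1$, $\varepsilon(b)=\varepsilon(c)=0$, and antipode $S(a)=d$, $S(b)=-q^{-1}b$, $S(c)=-q\,c$, $S(d)=a$. Put $\tau=*\circ S$. For $\mu,\nu\in\mathbb{R}$ let $\mathcal{C}_{\mu\nu}$ be the linear span of $a-d+2q^{1/2}\mu\,b$ and $q\nu\,b+c$. Then $\mathcal{C}_{\mu\nu}$ is a $\tau$-invariant two-sided coideal of $\mathcal{A}$.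
   Context: A two-sided coideal $I$ is a subspace with $\varepsilon(I)=0$ and $\Delta(I)\subset I\otimes\mathcal{A}+\mathcal{A}\otimes I$; $\tau$-invariant means $\tau(I)\subset I$. *)

(* Defs.v *)
From HB Require Import structures.
From mathcomp Require Import all_boot all_order all_algebra complex.
From mathcomp Require Import reals Rstruct.
Set Implicit Arguments. Unset Strict Implicit. Unset Printing Implicit Defensive.
Import Order.TTheory GRing.Theory Num.Theory.
Local Open Scope ring_scope.

Notation RR := Rdefinitions.R.
Notation CC := (Rdefinitions.R)[i].

Definition rc (x : RR) : CC := real_complex RR x.

Definition is_linear (U V : lmodType CC) (f : U -> V) :=
  forall (k : CC) (x y : U), f (k *: x + y) = k *: f x + f y.

Definition is_alg_morph (A B : algType CC) (f : A -> B) :=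
  [/\ is_linear f, f 1 = 1 & forall x y, f (x * y) = f x * f y].

Definition SLq_rel (A : algType CC) (q : CC) (a b c d : A) :=
  [/\ a * b = q *: (b * a), a * c = q *: (c * a), b * c = c * b,
      b * d = q *: (d * b) &
      [/\ c * d = q *: (d * c), d * a - q^-1 *: (b * c) = 1
        & a * d - q *: (b * c) = 1]].

Definition presents_SLq (A : algType CC) (q : CC) (a b c d : A) :=
  SLq_rel q a b c d /\
  forall (B : algType CC) (x y z w : B), SLq_rel q x y z w ->
    (exists f : A -> B, is_alg_morph f /\ [/\ f a = x, f b = y, f c = z & f d = w]) /\
    (forall f g : A -> B, is_alg_morph f -> is_alg_morph g ->
       f a = g a -> f b = g b -> f c = g c -> f d = g d -> f =1 g).

Definition is_tensor_algebra (A AA : algType CC) (tens : A -> A -> AA) :=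
  [/\ (forall x, is_linear (tens x)), (forall y, is_linear (tens^~ y)),
      (forall x y x' y', tens x y * tens x' y' = tens (x * x') (y * y')),
      tens 1 1 = 1 &
      forall (V : lmodType CC) (g : A -> A -> V),
        (forall x, is_linear (g x)) -> (forall y, is_linear (g^~ y)) ->
        (exists h : AA -> V, is_linear h /\ forall x y, h (tens x y) = g x y) /\
        (forall h1 h2 : AA -> V, is_linear h1 -> is_linear h2 ->
           (forall x y, h1 (tens x y) = g x y) ->
           (forall x y, h2 (tens x y) = g x y) -> h1 =1 h2)].

Definition SLq_hopf_star (A AA : algType CC) (tens : A -> A -> AA) (q : CC)
    (a b c d : A) (Delta : A -> AA) (eps : A -> CC) (S star : A -> A) :=
  [/\
      is_alg_morph Delta /\
      [/\ Delta a = tens a a + tens b c, Delta b = tens a b + tens b d,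
          Delta c = tens c a + tens d c & Delta d = tens c b + tens d d],
      [/\ (forall (k : CC) x y, eps (k *: x + y) = k * eps x + eps y),
          eps 1 = 1, (forall x y, eps (x * y) = eps x * eps y) &
          [/\ eps a = 1, eps d = 1, eps b = 0 & eps c = 0]],
      [/\ is_linear S, S 1 = 1, (forall x y, S (x * y) = S y * S x) &
          [/\ S a = d, S b = - q^-1 *: b, S c = - q *: c & S d = a]] &
      [/\ (forall (k : CC) x y, star (k *: x + y) = Num.conj k *: star x + star y),
          (forall x y, star (x * y) = star y * star x),
          (forall x, star (star x) = x) &
          [/\ star a = a, star b = b, star c = c & star d = d]]].

(* the subspace I (x) A + A (x) I of A (x) A *)
Definition in_coideal_tens (A AA : algType CC) (tens : A -> A -> AA)
    (I : A -> Prop) (u : AA) :=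
  exists n (xs ys : 'I_n -> A),
    (forall i, I (xs i) \/ I (ys i)) /\ u = \sum_(i < n) tens (xs i) (ys i).

Definition is_subspace (A : lmodType CC) (I : A -> Prop) :=
  I 0 /\ forall (k : CC) x y, I x -> I y -> I (k *: x + y).

Definition two_sided_coideal (A AA : algType CC) (tens : A -> A -> AA)
    (Delta : A -> AA) (eps : A -> CC) (I : A -> Prop) :=
  [/\ is_subspace I, (forall x, I x -> eps x = 0) &
      forall x, I x -> in_coideal_tens tens I (Delta x)].

Definition tau_invariant (A : algType CC) (tau : A -> A) (I : A -> Prop) :=
  forall x, I x -> I (tau x).

Definition Cmunu (A : algType CC) (q q12 : CC) (mu nu : RR) (a b c d : A) : A -> Prop :=
  fun x => exists al be : CC,
    x = al *: (a - d + (2 * q12 * rc mu) *: b) + be *: ((q * rc nu) *: b + c).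

(* Main.v *)
Require Import Defs.
From mathcomp Require Import all_boot all_order all_algebra complex.
From mathcomp Require Import reals Rstruct ring.
Import GRing.Theory Num.Theory.
Local Open Scope ring_scope.

Ltac pullt x :=
  lazymatch goal with
  | |- @eq _ (?y + ?z) _ =>
      first [ unify y x; reflexivity
            | etransitivity;
              [ apply: (congr1 (fun t => y + t)); pullt x | apply: addrCA ] ]
  | |- @eq _ ?y _ => unify y x; apply: esym (addr0 _)
  end.

Ltac cancel0 :=
  lazymatch goal with
  | |- @eq _ 0 0 => reflexivity
  | |- @eq _ 0 (- ?x + ?w) =>
      etransitivity; [| symmetry; apply: (congr1 (fun t => - x + t)); pullt x];
      rewrite addKr; cancel0
  | |- @eq _ 0 (?x + ?w) =>
      etransitivity; [| symmetry; apply: (congr1 (fun t => x + t)); pullt (- x)];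
      rewrite addNKr; cancel0
  end.

Ltac canc :=
  lazymatch goal with
  | |- @eq _ ?x ?x => reflexivity
  | |- @eq _ (?x + ?l) ?r =>
      etransitivity; [| symmetry; pullt x]; congr (x + _); canc
  | |- @eq _ ?x ?r =>
      etransitivity; [| symmetry; pullt x];
      rewrite -{1}(addr0 x); congr (x + _); cancel0
  end.

Ltac zmod_norm := rewrite ?scalerDr ?scalerN ?scaleNr ?scalerA ?opprD ?opprK -?addrA.

Section Lin.
Variables (U V : lmodType CC) (f : U -> V) (hf : is_linear f).
Lemma lin0 : f 0 = 0.
Proof.
have E := hf 1 0 0; rewrite !scale1r !addr0 in E.
by apply: (@addrI _ (f 0)); rewrite addr0 -E.
Qed.
Lemma linD x y : f (x + y) = f x + f y.
Proof. by rewrite -[x in LHS]scale1r hf scale1r. Qed.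
Lemma linZ k x : f (k *: x) = k *: f x.
Proof. by rewrite -[k *: x]addr0 hf lin0 addr0. Qed.
Lemma linN x : f (- x) = - f x.
Proof. by rewrite -scaleN1r linZ scaleN1r. Qed.
Lemma linB x y : f (x - y) = f x - f y.
Proof. by rewrite linD linN. Qed.
End Lin.
Arguments lin0 {U V f} hf.
Arguments linD {U V f} hf x y.
Arguments linZ {U V f} hf k x.
Arguments linN {U V f} hf x.
Arguments linB {U V f} hf x y.

Lemma comb2 (V : lmodType CC) (X Y : V) k al be al' be' :
  k *: (al *: X + be *: Y) + (al' *: X + be' *: Y) =
  (k * al + al') *: X + (k * be + be') *: Y.
Proof. rewrite !scalerDr !scalerDl !scalerA; zmod_norm; canc. Qed.

Section Coid.
Variables (A AA : algType CC) (tens : A -> A -> AA).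
Hypothesis Htr : forall x, is_linear (tens x).
Hypothesis Htl : forall y, is_linear (tens^~ y).
Variable I : A -> Prop.
Hypothesis HI : is_subspace I.
Let P := in_coideal_tens tens I.

Lemma ct_tens x y : I x \/ I y -> P (tens x y).
Proof.
move=> h; exists 1%N, (fun _ => x), (fun _ => y); split => //.
by rewrite big_ord1.
Qed.

Lemma ct_add u v : P u -> P v -> P (u + v).
Proof.
move=> [n [xs [ys [H1 ->]]]] [m [xs' [ys' [H2 ->]]]].
exists (n + m)%N, (fun i => match split i with inl j => xs j | inr j => xs' j end),
  (fun i => match split i with inl j => ys j | inr j => ys' j end); split.
  by move=> i; case: (split i).
rewrite big_split_ord /=; congr (_ + _); apply: eq_bigr => i _.
  by rewrite (unsplitK (inl i : 'I_n + 'I_m)).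
by rewrite (unsplitK (inr i : 'I_n + 'I_m)).
Qed.

Lemma ct_scale k u : P u -> P (k *: u).
Proof.
move=> [n [xs [ys [H1 ->]]]].
exists n, (fun i => k *: xs i), ys; split.
  move=> i; case: (H1 i) => h; [left|by right].
  by rewrite -[k *: _]addr0; apply: HI.2 => //; exact: HI.1.
rewrite scaler_sumr; apply: eq_bigr => i _.
by rewrite (linZ (Htl (ys i))).
Qed.

Lemma ct_opp u : P u -> P (- u).
Proof. by move=> h; rewrite -scaleN1r; apply: ct_scale. Qed.
End Coid.

Theorem proposition5 (q q12 : CC) (mu nu : RR)
    (A AA : algType CC) (tens : A -> A -> AA) (a b c d : A)
    (Delta : A -> AA) (eps : A -> CC) (S star : A -> A) :
  `|q| = 1 ->
  (forall n : nat, (0 < n)%N -> q ^+ n != 1) ->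
  q12 ^+ 2 = q ->
  presents_SLq q a b c d ->
  is_tensor_algebra tens ->
  SLq_hopf_star tens q a b c d Delta eps S star ->
  two_sided_coideal tens Delta eps (Cmunu q q12 mu nu a b c d) /\
  tau_invariant (fun x => star (S x)) (Cmunu q q12 mu nu a b c d).
Proof.
move=> nq _ q12q _ [Htr Htl _ _ _].
move=> [[[DL _ _] [Da Db Dc Dd]] [epsL _ _ [ea ed eb ec]]
        [SL _ _ [Sa Sb Sc Sd]] [stL _ _ [sa sb sc sd]]].
set m := 2 * q12 * rc mu.
set r := q * rc nu.
set X := a - d + m *: b.
set Y := r *: b + c.
set I := Cmunu q q12 mu nu a b c d.
have IE : forall x, I x <-> exists al be : CC, x = al *: X + be *: Y by [].
have HI : is_subspace I.
  split.
    by exists 0, 0; rewrite !scale0r addr0.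
  move=> k x y [al [be ->]] [al' [be' ->]].
  exists (k * al + al'), (k * be + be').
  exact: comb2.
have IX : I X by exists 1, 0; rewrite scale1r scale0r addr0.
have IY : I Y by exists 0, 1; rewrite scale1r scale0r add0r.
have eps0 : eps 0 = 0.
  have E := epsL 1 0 0; rewrite scale1r addr0 mul1r in E.
  by apply: (@addrI _ (eps 0)); rewrite addr0 -E.
have epsZ k x : eps (k *: x) = k * eps x.
  by rewrite -[k *: x]addr0 epsL eps0 addr0.
have epsD x y : eps (x + y) = eps x + eps y.
  by rewrite -[x in LHS]scale1r epsL mul1r.
have epsN x : eps (- x) = - eps x.
  by rewrite -scaleN1r epsZ mulN1r.
have tDl x y z : tens (x + y) z = tens x z + tens y z by exact: (linD (Htl z)).
have tNl x z : tens (- x) z = - tens x z by exact: (linN (Htl z)).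
have tZl k x z : tens (k *: x) z = k *: tens x z by exact: (linZ (Htl z)).
have tDr x y z : tens z (x + y) = tens z x + tens z y by exact: (linD (Htr z)).
have tNr x z : tens z (- x) = - tens z x by exact: (linN (Htr z)).
have tZr k x z : tens z (k *: x) = k *: tens z x by exact: (linZ (Htr z)).
have cadd := @ct_add A AA tens I.
have cscale := @ct_scale A AA tens Htl I HI.
have cneg := @ct_opp A AA tens Htl I HI.
have ctens := @ct_tens A AA tens I.
have PX : in_coideal_tens tens I (Delta X).
  have -> : Delta X = tens X a + tens d X - m *: tens b X + m *: tens X b
                      + tens b Y - tens Y b.
    rewrite /X /Y (linD DL) (linB DL) (linZ DL) Da Db Dd.
    rewrite !(tDl, tNl, tZl, tDr, tNr, tZr).
    zmod_norm; canc.
  repeat first [ apply: (cadd) | apply: (cneg) | apply: (cscale)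
               | (apply: (ctens); by [left|right]) ].
have PY : in_coideal_tens tens I (Delta Y).
  have -> : Delta Y = tens Y a + tens d Y + r *: tens X b - r *: tens b X.
    rewrite /X /Y (linD DL) (linZ DL) Db Dc.
    rewrite !(tDl, tNl, tZl, tDr, tNr, tZr).
    zmod_norm; canc.
  repeat first [ apply: (cadd) | apply: (cneg) | apply: (cscale)
               | (apply: (ctens); by [left|right]) ].
split.
  split => //.
    move=> x [al [be ->]].
    rewrite epsD !epsZ /X /Y !epsD epsN !epsZ ea ed eb ec.
    by rewrite subrr !mulr0 !addr0 mulr0 mulr0 addr0.
  move=> x [al [be ->]].
  rewrite (linD DL) !(linZ DL).
  by apply: (cadd); apply: (cscale).
have st0 : star 0 = 0.
  have E := stL 1 0 0; rewrite scale1r addr0 rmorph1 scale1r in E.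
  by apply: (@addrI _ (star 0)); rewrite addr0 -E.
have stZ k x : star (k *: x) = Num.conj k *: star x.
  by rewrite -[k *: x]addr0 stL st0 addr0.
have stD x y : star (x + y) = star x + star y.
  by rewrite -[x in LHS]scale1r stL rmorph1 scale1r.
have stN x : star (- x) = - star x.
  by rewrite -scaleN1r stZ rmorphN1 scaleN1r.
have n12 : `|q12| = 1.
  apply/eqP; rewrite -(sqrp_eq1 (normr_ge0 q12)) -normrX q12q nq //.
have cq : Num.conj q = q^-1 by rewrite invC_norm nq expr1n invr1 mul1r.
have cq12 : Num.conj q12 = q12^-1 by rewrite invC_norm n12 expr1n invr1 mul1r.
have q12nz : q12 != 0 by rewrite -normr_eq0 n12 oner_eq0.
have crc x : Num.conj (rc x) = rc x := conjc_real x.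
have cM z w : Num.conj (z * w) = Num.conj z * Num.conj w by exact: rmorphM.
have cN z : Num.conj (- z) = - Num.conj z by exact: rmorphN.
have cV z : Num.conj (z^-1) = (Num.conj z)^-1 by exact: fmorphV.
have c2 : Num.conj (2 : CC) = 2 by exact: rmorph_nat.
have tauX : star (S X) = - X.
  rewrite /X (linD SL) (linB SL) (linZ SL) Sa Sb Sd !(stD, stN, stZ) sa sb sd.
  rewrite scalerA.
  have -> : Num.conj m * Num.conj (- q^-1) = - m.
    rewrite /m !cM cN cV cq c2 crc cq12 invrK -q12q.
    by field.
  zmod_norm; canc.
have tauY : star (S Y) = (- Num.conj q) *: Y.
  rewrite /Y (linD SL) (linZ SL) Sb Sc !(stD, stN, stZ) sb sc.
  rewrite !scalerA /r !cM !cN crc.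
  rewrite [RHS]scalerDr [in RHS]scalerA.
  congr (_ *: _ + _ *: _).
  rewrite cV cq invrK; field.
  by rewrite -normr_eq0 nq oner_eq0.
move=> x [al [be ->]].
exists (- Num.conj al), (Num.conj be * - Num.conj q).
rewrite (linD SL) !(linZ SL) stD !stZ tauX tauY.
by rewrite scalerA scalerN scaleNr /X /Y /m /r.
Qed.
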